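(* Let $m\ge1$ and let $\mathcal{E}:\ w''=w^m\Phi(z,w,w'/w^m)$ and $\mathcal{E}^*:\ w''=w^m\Phi^*(z,w,w'/w^m)$ be two ODEs, where $\Phi,\Phi^*\in\mathbb{C}[[z,w,\zeta]]$ satisfy $\Phi,\Phi^*=O(\zeta^2)$. Write $\Phi=\sum_{k\ge2}\Phi_k(z,w)\zeta^k$, $\Phi_2=\sum_jA_j(w)z^j$, $\Phi_3=\sum_jB_j(w)z^j$, and similarly $A_j^*,B_j^*$ for $\Phi^*$. If there exists a transformation from $\mathcal{E}$ to $\mathcal{E}^*$ of the admissible kind described below, then $A_0(0)=A_0^*(0)$, $A_1(0)=A_1^*(0)$, $B_0(0)=B_0^*(0)$, $B_1(0)=B_1^*(0)$.
   Context: An admissible transformation is an invertible formal map $(z,w)\mapsto(z+f(z,w),\ w+wg_0(w)+w^mg(z,w))$ with $f(0,0)=0$, $f_z(0,0)=0$, $g_0(0)=0$, $g(z,w)$ divisible by $zw$, and $g_0^{(\ell)}(0)\in\mathbb{R}$ for $\ell\le m-1$, which transforms $\mathcal{E}$ into $\mathcal{E}^*$, i.e. maps graphs of solutions of one equation to graphs of solutions of the other (for formal objects, in the sense of the standard transformation rule for second order ODEs under point transformations). *)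

(* Defs.v *)
From HB Require Import structures.
From mathcomp Require Import all_boot all_order all_algebra.
From mathcomp Require Import complex.
From mathcomp Require Import Rstruct.

Set Implicit Arguments.
Unset Strict Implicit.
Unset Printing Implicit Defensive.
Import Order.TTheory GRing.Theory Num.Theory.
Local Open Scope ring_scope.

Definition Cplx : numClosedFieldType := (Rdefinitions.R)[i].

Section FPS.
Variable K : comNzRingType.

(* ps3 K = K[[z,w,zeta]] : F a b c is the coefficient of z^a w^b zeta^c. *)
Definition ps3 := nat -> nat -> nat -> K.
Definition ps2 := nat -> nat -> K.
Definition ps1 := nat -> K.

Definition lift2 (F : ps2) : ps3 := fun a b c => if c == 0%N then F a b else 0.
Definition lift1 (F : ps1) : ps3 :=
  fun a b c => if (a == 0%N) && (c == 0%N) then F b else 0.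

Definition psC (k : K) : ps3 :=
  fun a b c => if [&& a == 0%N, b == 0%N & c == 0%N] then k else 0.
Definition psmono (i j k : nat) : ps3 :=
  fun a b c => if [&& a == i, b == j & c == k] then 1 else 0.
Definition psz : ps3 := psmono 1 0 0.
Definition psw : ps3 := psmono 0 1 0.

Definition psadd (F G : ps3) : ps3 := fun a b c => F a b c + G a b c.
Definition psopp (F : ps3) : ps3 := fun a b c => - F a b c.
Definition pssub (F G : ps3) : ps3 := psadd F (psopp G).
Definition psscale (k : K) (F : ps3) : ps3 := fun a b c => k * F a b c.
Definition psmul (F G : ps3) : ps3 := fun a b c =>
  \sum_(i < a.+1) \sum_(j < b.+1) \sum_(k < c.+1)
     F i j k * G (a - i)%N (b - j)%N (c - k)%N.
Fixpoint psexp (F : ps3) (n : nat) : ps3 :=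
  match n with 0%N => psC 1 | n'.+1 => psmul F (psexp F n') end.

Definition dz (F : ps3) : ps3 := fun a b c => (a.+1)%:R * F a.+1 b c.
Definition dw (F : ps3) : ps3 := fun a b c => (b.+1)%:R * F a b.+1 c.

(* composition Phi(X, Y, Q), meaningful when X, Y, Q have zero constant term
   (then only finitely many terms contribute to each coefficient, namely
   those with i + j + k <= a + b + c). *)
Definition pscomp (Phi X Y Q : ps3) : ps3 := fun a b c =>
  let n := (a + b + c)%N in
  \sum_(i < n.+1) \sum_(j < n.+1) \sum_(k < n.+1)
     Phi i j k * psmul (psexp X i) (psmul (psexp Y j) (psexp Q k)) a b c.

End FPS.

Arguments psC {K}. Arguments psmono {K}. Arguments psz {K}. Arguments psw {K}.

Local Notation "F \+ G" := (psadd F G) (at level 50, left associativity).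
Local Notation "F \* G" := (psmul F G) (at level 40, left associativity).
Local Notation "F \- G" := (pssub F G) (at level 50, left associativity).

Definition adm_Z (f : ps2 Cplx) : ps3 Cplx := psz \+ lift2 f.
Definition adm_W (m : nat) (g0 : ps1 Cplx) (g : ps2 Cplx) : ps3 Cplx :=
  psw \+ (psw \* lift1 g0) \+ (psmono 0 m 0 \* lift2 g).

Definition formal_invertible (Z W : ps3 Cplx) : Prop :=
  exists Zi Wi : ps2 Cplx, Zi 0%N 0%N = 0 /\ Wi 0%N 0%N = 0 /\
    pscomp Z (lift2 Zi) (lift2 Wi) (psC 0) = psz /\
    pscomp W (lift2 Zi) (lift2 Wi) (psC 0) = psw /\
    pscomp (lift2 Zi) Z W (psC 0) = psz /\
    pscomp (lift2 Wi) Z W (psC 0) = psw.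

(* The standard transformation rule for w'' = F(z,w,p) under the point map
   (Z,W):  with D = d/dz + p d/dw + F d/dp (total derivative),
       D(DW) * DZ - DW * D(DZ) = F*(Z, W, P) * (DZ)^3,   P = DW / DZ.
   Here F = w^m Phi(z,w,p/w^m), F* = W^m Phi*(Z,W,P/W^m); we substitute
   p = w^m zeta, so that every term becomes a formal series in (z,w,zeta),
   and zeta* := P / W^m is the (unique) series with
       W^m * zeta* * DZ = DW. *)
Definition transforms (m : nat) (Phi Phis : ps3 Cplx) (Z W : ps3 Cplx) : Prop :=
  let p := psmono 0 m 1 in
  let F := psmono 0 m 0 \* Phi in
  let DZ := dz Z \+ p \* dw Z in
  let DW := dz W \+ p \* dw W in
  let DDZ := dz (dz Z) \+ psscale 2%:R (p \* dz (dw Z))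
             \+ (p \* p \* dw (dw Z)) \+ F \* dw Z in
  let DDW := dz (dz W) \+ psscale 2%:R (p \* dz (dw W))
             \+ (p \* p \* dw (dw W)) \+ F \* dw W in
  exists zs : ps3 Cplx, zs 0%N 0%N 0%N = 0 /\
    psexp W m \* zs \* DZ = DW /\
    DDW \* DZ \- DW \* DDZ
      = psexp W m \* pscomp Phis Z W zs \* psexp DZ 3.

Definition admissible_transformation (m : nat) (Phi Phis : ps3 Cplx)
    (f : ps2 Cplx) (g0 : ps1 Cplx) (g : ps2 Cplx) : Prop :=
  f 0%N 0%N = 0 /\ f 1%N 0%N = 0 /\
      g0 0%N = 0 /\
      (forall a b, (a == 0%N) || (b == 0%N) -> g a b = 0) /\ (* zw | g *)
      (forall l, (l <= m.-1)%N -> (l`!)%:R * g0 l \is Num.real) /\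
                                                (* g0^(l)(0) real, l <= m-1 *)
      formal_invertible (adm_Z f) (adm_W m g0 g) /\
      transforms m Phi Phis (adm_Z f) (adm_W m g0 g).

Definition O_zeta2 (Phi : ps3 Cplx) : Prop :=
  forall a b c, (c < 2)%N -> Phi a b c = 0.

(* Main.v *)
Require Import Defs.
From HB Require Import structures.
From mathcomp Require Import all_boot all_order all_algebra.
From mathcomp Require Import complex.
From mathcomp Require Import Rstruct.
From mathcomp Require Import zify.
From Stdlib Require Import FunctionalExtensionality.
Set Implicit Arguments. Unset Strict Implicit. Unset Printing Implicit Defensive.
Import Order.TTheory GRing.Theory Num.Theory.
Local Open Scope ring_scope.

Section Gen.
Variable K : comNzRingType.

Definition z0 : ps3 K := fun _ _ _ => 0.
Definition vanish (X : ps3 K) (p : nat) := forall a b c, (b < p)%N -> X a b c = 0.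
Definition cg (A p : nat) (X Y : ps3 K) :=
  [/\ vanish X p, vanish Y p & forall a c, (a <= A)%N -> X a p c = Y a p c].

Lemma ext3 (X Y : ps3 K) : (forall a b c, X a b c = Y a b c) -> X = Y.
Proof.
move=> h; apply: functional_extensionality => a;
apply: functional_extensionality => b; apply: functional_extensionality => c.
exact: h.
Qed.

Lemma delta3 (A B C i j k : nat) (G : nat -> nat -> nat -> K) :
  \sum_(i' < A) \sum_(j' < B) \sum_(k' < C)
     (if [&& (i' == i :> nat), (j' == j :> nat) & (k' == k :> nat)] then G i' j' k' else 0)
  = if [&& (i < A)%N, (j < B)%N & (k < C)%N] then G i j k else 0.
Proof.
case: (boolP [&& (i < A)%N, (j < B)%N & (k < C)%N]) => H; last first.
  rewrite big1 // => i' _; rewrite big1 // => j' _; rewrite big1 // => k' _.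
  case: ifP => // /and3P [/eqP e1 /eqP e2 /eqP e3].
  by move: H; rewrite -e1 -e2 -e3 !ltn_ord.
case/and3P: H => hi hj hk.
rewrite (bigD1 (Ordinal hi)) //= [X in _ + X]big1 ?addr0; last first.
  move=> i' hi'; have e : (nat_of_ord i' == i) = false by apply/negbTE.
  by rewrite big1 // => j' _; rewrite big1 // => k' _; rewrite e.
rewrite (bigD1 (Ordinal hj)) //= [X in _ + X]big1 ?addr0; last first.
  move=> j' hj'; have e : (nat_of_ord j' == j) = false by apply/negbTE.
  by rewrite big1 // => k' _; rewrite e andbF.
rewrite (bigD1 (Ordinal hk)) //= [X in _ + X]big1 ?addr0; last first.
  move=> k' hk'; have e : (nat_of_ord k' == k) = false by apply/negbTE.
  by rewrite e !andbF.
by rewrite !eqxx.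
Qed.

Lemma mono_mulE (i j k : nat) (X : ps3 K) a b c :
  psmul (psmono i j k) X a b c =
  if [&& (i <= a)%N, (j <= b)%N & (k <= c)%N] then X (a - i)%N (b - j)%N (c - k)%N else 0.
Proof.
transitivity (if [&& (i < a.+1)%N, (j < b.+1)%N & (k < c.+1)%N]
  then X (a - i)%N (b - j)%N (c - k)%N else 0); last by [].
rewrite /psmul /psmono -(delta3 _ _ _ _ _ _ (fun i' j' k' => X (a - i')%N (b - j')%N (c - k')%N)).
apply eq_bigr => i' _; apply eq_bigr => j' _; apply eq_bigr => k' _.
by case: ifP; rewrite ?mul1r ?mul0r.
Qed.

Lemma psmulC (F G : ps3 K) a b c : psmul F G a b c = psmul G F a b c.
Proof.
rewrite /psmul (reindex_inj rev_ord_inj); apply eq_bigr => i _.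
rewrite (reindex_inj rev_ord_inj); apply eq_bigr => j _.
rewrite (reindex_inj rev_ord_inj); apply eq_bigr => k _ /=.
have hi : (i <= a)%N by rewrite -ltnS. have hj : (j <= b)%N by rewrite -ltnS.
have hk : (k <= c)%N by rewrite -ltnS.
by rewrite !subSS !subKn // mulrC.
Qed.


Lemma vanish_mul (P X : ps3 K) p q : vanish P p -> vanish X q -> vanish (psmul P X) (p + q)%N.
Proof.
move=> hP hX a b c hb; rewrite /psmul big1 // => i _; rewrite big1 // => j _; rewrite big1 // => k _.
case: (ltnP j p) => hj; first by rewrite hP ?mul0r.
rewrite hX ?mulr0 //; have := ltn_ord j; lia.
Qed.

Lemma level_mul (P X : ps3 K) p q a c : vanish P p -> vanish X q ->
  psmul P X a (p + q)%N c = \sum_(i < a.+1) \sum_(k < c.+1) P i p k * X (a - i)%N q (c - k)%N.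
Proof.
move=> hP hX; rewrite /psmul; apply eq_bigr => i _.
have hp : (p < (p + q).+1)%N by lia.
rewrite (bigD1 (Ordinal hp)) //= [X in _ + X]big1 ?addr0; last first.
  move=> j hj; have hj' : (nat_of_ord j != p) by [].
  rewrite big1 // => k _.
  case: (ltnP j p) => hjp; first by rewrite hP ?mul0r.
  rewrite hX ?mulr0 //; have := ltn_ord j; move/eqP: hj' => hj'; lia.
by apply eq_bigr => k _; rewrite addKn.
Qed.

Lemma cg_mul A p q (P P' X X' : ps3 K) : cg A p P P' -> cg A q X X' ->
  cg A (p + q)%N (psmul P X) (psmul P' X').
Proof.
move=> [h1 h2 h3] [h4 h5 h6]; split; try exact: vanish_mul.
move=> a c ha; rewrite !level_mul //; apply eq_bigr => i _; apply eq_bigr => k _.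
have hi : (i <= a)%N by rewrite -ltnS.
rewrite h3 ?h6 //; lia.
Qed.

Lemma cg_add A p (X X' Y Y' : ps3 K) : cg A p X X' -> cg A p Y Y' ->
  cg A p (psadd X Y) (psadd X' Y').
Proof.
move=> [h1 h2 h3] [h4 h5 h6]; split.
- by move=> a b c hb; rewrite /psadd h1 ?h4 ?addr0.
- by move=> a b c hb; rewrite /psadd h2 ?h5 ?addr0.
- by move=> a c ha; rewrite /psadd h3 ?h6.
Qed.

Lemma cg_opp A p (X X' : ps3 K) : cg A p X X' -> cg A p (psopp X) (psopp X').
Proof.
move=> [h1 h2 h3]; split.
- by move=> a b c hb; rewrite /psopp h1 ?oppr0.
- by move=> a b c hb; rewrite /psopp h2 ?oppr0.
- by move=> a c ha; rewrite /psopp h3.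
Qed.

Lemma cg_sub A p (X X' Y Y' : ps3 K) : cg A p X X' -> cg A p Y Y' ->
  cg A p (pssub X Y) (pssub X' Y').
Proof. by move=> h1 h2; apply: cg_add => //; apply: cg_opp. Qed.

Lemma cg_scale A p k (X X' : ps3 K) : cg A p X X' -> cg A p (psscale k X) (psscale k X').
Proof.
move=> [h1 h2 h3]; split.
- by move=> a b c hb; rewrite /psscale h1 ?mulr0.
- by move=> a b c hb; rewrite /psscale h2 ?mulr0.
- by move=> a c ha; rewrite /psscale h3.
Qed.

Lemma vanish0 (X : ps3 K) : vanish X 0.
Proof. by []. Qed.

Lemma cg_refl A p (X : ps3 K) : vanish X p -> cg A p X X.
Proof. by move=> h; split. Qed.

Lemma cg_exp A p n (X X' : ps3 K) : cg A p X X' -> cg A (n * p)%N (psexp X n) (psexp X' n).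
Proof.
move=> h; elim: n => [|n IH] /=; first by apply: cg_refl.
by rewrite mulSn; apply: cg_mul.
Qed.

Lemma cg_trans A p (X Y Z : ps3 K) : cg A p X Y -> cg A p Y Z -> cg A p X Z.
Proof.
by move=> [h1 h2 h3] [h4 h5 h6]; split => // a c ha; rewrite h3 ?h6.
Qed.

Lemma cg_eqr A p (X Y Z : ps3 K) : cg A p X Y -> Y = Z -> cg A p X Z.
Proof. by move=> h <-. Qed.

Lemma cg_z0 A p q (X : ps3 K) : vanish X q -> (p < q)%N -> cg A p X z0.
Proof.
move=> h hpq; split => //.
- by move=> a b c hb; apply: h; lia.
- by move=> a c _; apply: h.
Qed.

Lemma mul_C1l (X : ps3 K) : psmul (psC 1) X = X.
Proof.
apply: ext3 => a b c; change (psmul (psmono 0 0 0) X a b c = X a b c).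
by rewrite mono_mulE /= !subn0.
Qed.

Lemma mul_C1r (X : ps3 K) : psmul X (psC 1) = X.
Proof. by apply: ext3 => a b c; rewrite psmulC mul_C1l. Qed.

Lemma mono_mono i j k i' j' k' :
  psmul (psmono i j k) (psmono i' j' k') = psmono (i + i')%N (j + j')%N (k + k')%N :> ps3 K.
Proof.
apply: ext3 => a b c; rewrite mono_mulE /psmono.
case: (leqP i a) => hi /=; last first.
  by case: eqP => // e; lia.
case: (leqP j b) => hj /=; last first.
  by case: (a == _) => //; case: eqP => // e; lia.
case: (leqP k c) => hk /=; last first.
  by case: (a == _) => //; case: (b == _) => //; case: eqP => // e; lia.
have e1 : ((a - i)%N == i') = (a == i + i')%N by apply/eqP/eqP; lia.
have e2 : ((b - j)%N == j') = (b == j + j')%N by apply/eqP/eqP; lia.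
have e3 : ((c - k)%N == k') = (c == k + k')%N by apply/eqP/eqP; lia.
by rewrite e1 e2 e3.
Qed.

Lemma mono_exp i j k n : psexp (psmono i j k) n = psmono (n * i)%N (n * j)%N (n * k)%N :> ps3 K.
Proof.
elim: n => [|n IH] /=; first by [].
by rewrite IH mono_mono !mulSn.
Qed.

Lemma C1_exp n : psexp (psC 1) n = psC 1 :> ps3 K.
Proof. by elim: n => [|n IH] //=; rewrite IH mul_C1l. Qed.

Lemma mul_z0r (X : ps3 K) : psmul X z0 = z0.
Proof.
apply: ext3 => a b c; rewrite /psmul big1 // => i _; rewrite big1 // => j _.
by rewrite big1 // => k _; rewrite mulr0.
Qed.

Lemma add_z0l (X : ps3 K) : psadd z0 X = X.
Proof. by apply: ext3 => a b c; rewrite /psadd /z0 add0r. Qed.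

Lemma add_z0r (X : ps3 K) : psadd X z0 = X.
Proof. by apply: ext3 => a b c; rewrite /psadd /z0 addr0. Qed.

Lemma scale_z0 k : psscale k z0 = z0.
Proof. by apply: ext3 => a b c; rewrite /psscale /z0 mulr0. Qed.

Lemma vanish_mono i j k p : (p <= j)%N -> vanish (psmono i j k) p.
Proof.
move=> h a b c hb; rewrite /psmono.
have /negbTE -> : b != j by apply/eqP; lia.
by rewrite andbF.
Qed.


Lemma vanish_exp (X : ps3 K) p n : vanish X p -> vanish (psexp X n) (n * p)%N.
Proof.
move=> h; elim: n => [|n IH] /=; first exact: vanish0.
by rewrite mulSn; apply: vanish_mul.
Qed.

Lemma comp_level A (Phis Z W zs : ps3 K) :
  cg A 0 Z psz -> vanish W 1 -> cg A 0 zs (psmono 0 0 1) ->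
  forall a c, (a <= A)%N -> pscomp Phis Z W zs a 0 c = Phis a 0 c.
Proof.
move=> hZ hW hzs a c ha; rewrite /pscomp.
set n := (a + 0 + c)%N.
transitivity (\sum_(i < n.+1) \sum_(j < n.+1) \sum_(k < n.+1)
  (if [&& (i == a :> nat), (j == 0%N :> nat) & (k == c :> nat)] then Phis i j k else 0)).
  apply eq_bigr => i _; apply eq_bigr => j _; apply eq_bigr => k _.
  case: (posnP j) => hj.
    rewrite hj /= mul_C1l.
    have hc := cg_mul (cg_exp i hZ) (cg_exp k hzs).
    rewrite !muln0 /= in hc; case: hc => _ _ hc; rewrite hc //.
    rewrite /psz mono_exp mono_exp mono_mono !muln0 !muln1 !addn0 add0n /psmono.
    rewrite [(a == _)%N]eq_sym [(c == _)%N]eq_sym.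
    by case: ifP; rewrite ?mulr1 ?mulr0.
  rewrite /= andbF (@vanish_mul _ _ (i * 0)%N (j * 1 + k * 0)%N) ?mulr0 //.
  - exact: vanish_exp.
  - by apply: vanish_mul; apply: vanish_exp.
  - by rewrite !muln0 muln1 addn0 add0n.
rewrite delta3 ifT //; apply/and3P; split; rewrite /n; lia.
Qed.

End Gen.
Arguments z0 {K}.

Section Spec.
Variable K : comNzRingType.
Variables (m : nat) (f : ps2 K) (g0 : ps1 K) (g : ps2 K).
Hypothesis hm : (1 <= m)%N.
Hypothesis hf0 : f 0%N 0%N = 0.
Hypothesis hf1 : f 1%N 0%N = 0.
Hypothesis hg00 : g0 0%N = 0.
Hypothesis hg : forall a b, (a == 0%N) || (b == 0%N) -> g a b = 0.

Let W : ps3 K := psadd (psadd psw (psmul psw (lift1 g0))) (psmul (psmono 0 m 0) (lift2 g)).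
Let Z : ps3 K := psadd psz (lift2 f).

Lemma WE a b c : W a b c =
  (if [&& a == 0%N, b == 1%N & c == 0%N] then 1 else 0)
  + (if (1 <= b)%N && (a == 0%N) && (c == 0%N) then g0 (b - 1)%N else 0)
  + (if (m <= b)%N && (c == 0%N) then g a (b - m)%N else 0).
Proof.
rewrite /W /psadd /psw !mono_mulE /lift1 /lift2 /psmono !subn0 /= !leq0n !andbT.
by case: (0 < b)%N; case: (m <= b)%N.
Qed.

Lemma W0 a c : W a 0 c = 0.
Proof.
rewrite WE /=; have -> : (m <= 0)%N = false by lia.
by rewrite andbF !addr0.
Qed.

Lemma W1 a c : W a 1 c = if (a == 0%N) && (c == 0%N) then 1 else 0.
Proof.
rewrite WE /= subnn hg00 if_same addr0.
case: (leqP m 1) => h /=; last by rewrite addr0.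
have -> : (1 - m = 0)%N by lia.
by rewrite hg ?eqxx ?orbT // if_same addr0.
Qed.

Lemma Ws a b c : (b <= m)%N -> W a.+1 b c = 0.
Proof.
move=> hb; rewrite WE /= andbF /= !add0r.
case: (leqP m b) => h /=; last by [].
have -> : (b - m = 0)%N by lia.
by rewrite hg ?eqxx ?orbT // if_same.
Qed.

Lemma vW : vanish W 1.
Proof. by move=> a b c; rewrite ltnS leqn0 => /eqP ->; apply: W0. Qed.

Lemma cgW A : cg A 1 W psw.
Proof.
split; [exact: vW | exact: vanish_mono | ].
by move=> a c _; rewrite W1 /psw /psmono.
Qed.

Lemma cg_dzW A : cg A m (dz W) z0.
Proof.
split => //.
- by move=> a b c hb; rewrite /dz Ws ?mulr0 //; lia.
- by move=> a c _; rewrite /dz Ws ?mulr0.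
Qed.

Lemma cg_dzdzW A : cg A m (dz (dz W)) z0.
Proof.
split => //.
- by move=> a b c hb; rewrite /dz Ws ?mulr0 //; lia.
- by move=> a c _; rewrite /dz Ws ?mulr0.
Qed.

Lemma cg_dwW A : cg A 0 (dw W) (psC 1).
Proof. by split => // a c _; rewrite /dw W1 mul1r /psC. Qed.

Lemma cg_dzdwW A : cg A 0 (dz (dw W)) z0.
Proof. by split => // a c _; rewrite /dz /dw Ws ?mulr0. Qed.

Let p : ps3 K := psmono 0 m 1.

Lemma vp : vanish p m.
Proof. exact: vanish_mono. Qed.

Lemma cg_DW A : cg A m (psadd (dz W) (psmul p (dw W))) p.
Proof.
have h1 := cg_mul (cg_refl A vp) (cg_dwW A).
rewrite addn0 in h1.
have h := cg_add (cg_dzW A) h1.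
by rewrite add_z0l mul_C1r in h.
Qed.

Variable Phi : ps3 K.
Let F : ps3 K := psmul (psmono 0 m 0) Phi.

Lemma vF : vanish F m.
Proof. by rewrite -(addn0 m); apply: vanish_mul; [apply: vanish_mono|]. Qed.

Lemma cg_DDW A : cg A m
  (psadd (psadd (psadd (dz (dz W)) (psscale 2%:R (psmul p (dz (dw W)))))
     (psmul (psmul p p) (dw (dw W)))) (psmul F (dw W))) F.
Proof.
have h1 := cg_mul (cg_refl A vp) (cg_dzdwW A).
rewrite addn0 mul_z0r in h1.
have h2 : cg A m (psmul (psmul p p) (dw (dw W))) z0.
  apply: (@cg_z0 _ _ _ (m + m + 0)%N); last by lia.
  by apply: vanish_mul => //; apply: vanish_mul; apply: vp.
have h3 := cg_mul (cg_refl A vF) (cg_dwW A).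
rewrite addn0 mul_C1r in h3.
have h := cg_add (cg_add (cg_add (cg_dzdzW A) (cg_scale 2%:R h1)) h2) h3.
by rewrite scale_z0 !add_z0l in h.
Qed.

Lemma ZE a b c : Z a b c = (if [&& a == 1%N, b == 0%N & c == 0%N] then 1 else 0)
  + (if c == 0%N then f a b else 0).
Proof. by []. Qed.

Lemma cgZ A : (A <= 1)%N -> cg A 0 Z psz.
Proof.
move=> hA; split => // a c ha; rewrite ZE /psz /psmono.
have : (a = 0 \/ a = 1)%N by lia.
case=> ->; rewrite /= ?hf0 ?hf1; by case: (c == 0%N); rewrite ?addr0.
Qed.

Lemma cg_DZ A : (A <= 1)%N -> (A = 1%N -> f 2 0 = 0) ->
  cg A 0 (psadd (dz Z) (psmul p (dw Z))) (psC 1).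
Proof.
move=> hA hf2.
have h1 : cg A 0 (dz Z) (psC 1).
  split => // a c ha; rewrite /dz ZE /psC.
  have : (a = 0 \/ (a = 1 /\ A = 1))%N by lia.
  case=> [->|[-> /hf2 e]]; rewrite /= ?hf1 ?e; case: (c == 0%N);
    by rewrite ?addr0 ?mulr0 ?mul1r.
have h2 : cg A 0 (psmul p (dw Z)) z0.
  apply: (@cg_z0 _ _ _ (m + 0)%N); last by lia.
  by apply: vanish_mul => //; apply: vp.
by have := cg_add h1 h2; rewrite add_z0r.
Qed.

Lemma cg_DDZ A : cg A 0
  (psadd (psadd (psadd (dz (dz Z)) (psscale 2%:R (psmul p (dz (dw Z)))))
     (psmul (psmul p p) (dw (dw Z)))) (psmul F (dw Z))) (dz (dz Z)).
Proof.
have h1 : cg A 0 (psmul p (dz (dw Z))) z0.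
  apply: (@cg_z0 _ _ _ (m + 0)%N); last by lia.
  by apply: vanish_mul => //; apply: vp.
have h2 : cg A 0 (psmul (psmul p p) (dw (dw Z))) z0.
  apply: (@cg_z0 _ _ _ (m + m + 0)%N); last by lia.
  by apply: vanish_mul => //; apply: vanish_mul; apply: vp.
have h3 : cg A 0 (psmul F (dw Z)) z0.
  apply: (@cg_z0 _ _ _ (m + 0)%N); last by lia.
  by apply: vanish_mul => //; apply: vF.
have h := cg_add (cg_add (cg_add (cg_refl A (@vanish0 _ (dz (dz Z)))) (cg_scale 2%:R h1)) h2) h3.
by rewrite scale_z0 !add_z0r in h.
Qed.


Variables (Phis zs : ps3 K).
Let DZ := psadd (dz Z) (psmul p (dw Z)).
Let DW := psadd (dz W) (psmul p (dw W)).
Let DDZ := psadd (psadd (psadd (dz (dz Z)) (psscale 2%:R (psmul p (dz (dw Z)))))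
     (psmul (psmul p p) (dw (dw Z)))) (psmul F (dw Z)).
Let DDW := psadd (psadd (psadd (dz (dz W)) (psscale 2%:R (psmul p (dz (dw W)))))
     (psmul (psmul p p) (dw (dw W)))) (psmul F (dw W)).
Hypothesis E1 : psmul (psmul (psexp W m) zs) DZ = DW.
Hypothesis E2 : pssub (psmul DDW DZ) (psmul DW DDZ)
  = psmul (psmul (psexp W m) (pscomp Phis Z W zs)) (psexp DZ 3).

Lemma cgWm A : cg A m (psexp W m) (psmono 0 m 0).
Proof.
have h := cg_exp m (cgW A).
by rewrite muln1 /psw mono_exp muln0 muln1 in h.
Qed.

Lemma zsE A : (A <= 1)%N -> (A = 1%N -> f 2 0 = 0) -> cg A 0 zs (psmono 0 0 1).
Proof.
move=> hA hf2.
have h := cg_mul (cg_mul (cgWm A) (cg_refl A (@vanish0 _ zs))) (cg_DZ hA hf2).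
rewrite !addn0 mul_C1r E1 in h.
case: h => _ _ h; case: (cg_DW A) => _ _ h'.
split => // a c ha; have := h a c ha.
rewrite /DW h' // (mono_mulE 0 m 0 zs) /= subnn !subn0 leqnn /p /psmono eqxx /=.
by move=> <-.
Qed.

Lemma key A : (A <= 1)%N -> (A = 1%N -> f 2 0 = 0) ->
  forall a c, (a <= A)%N -> Phi a 0 c -
    (if (1 <= c)%N then (a.+1)%:R * ((a.+2)%:R * Z a.+2 0 (c - 1)%N) else 0)
    = Phis a 0 c.
Proof.
move=> hA hf2.
have hL := cg_sub (cg_mul (cg_DDW A) (cg_DZ hA hf2)) (cg_mul (cg_DW A) (cg_DDZ A)).
rewrite !addn0 mul_C1r in hL.
have hcomp : cg A 0 (pscomp Phis Z W zs) Phis.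
  split => // a c ha; apply: comp_level ha; [exact: cgZ | exact: vW | exact: zsE].
have hR := cg_mul (cg_mul (cgWm A) hcomp) (cg_exp 3 (cg_DZ hA hf2)).
rewrite !muln0 !addn0 C1_exp mul_C1r -E2 in hR.
move=> a c ha; case: hL => _ _ hL; case: hR => _ _ hR.
have := hL a c ha; rewrite hR // /pssub /psadd /psopp /F /p !mono_mulE /= subnn !subn0 leqnn /=.
by move=> ->.
Qed.

End Spec.

Unset Implicit Arguments.

Theorem lemma4p2 (m : nat) (Phi Phis : ps3 Cplx) :
  (1 <= m)%N -> O_zeta2 Phi -> O_zeta2 Phis ->
  (exists (f : ps2 Cplx) (g0 : ps1 Cplx) (g : ps2 Cplx),
      admissible_transformation m Phi Phis f g0 g) ->
  [/\ Phi 0%N 0%N 2%N = Phis 0%N 0%N 2%N, Phi 1%N 0%N 2%N = Phis 1%N 0%N 2%N,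
      Phi 0%N 0%N 3%N = Phis 0%N 0%N 3%N & Phi 1%N 0%N 3%N = Phis 1%N 0%N 3%N].
Proof.
move=> hm hPhi hPhis [f [g0 [g [hf0 [hf1 [hg00 [hg [_ [_ htr]]]]]]]]].
case: htr => zs [_ [E1 E2]].
have k0 := key hm hf0 hf1 hg00 hg E1 E2 (A:=0) isT (fun e => ltac:(done)) 1%N (leqnn 0).
rewrite hPhi // hPhis // /= in k0.
have hf20 : f 2%N 0%N = 0.
  move: k0; rewrite /psadd /psz /psmono /lift2 /= sub0r mul1r add0r.
  by move/eqP; rewrite oppr_eq0 mulf_eq0 pnatr_eq0 /= => /eqP.
have kk : forall a c, (a <= 1)%N -> (1 < c)%N -> Phi a 0%N c = Phis a 0%N c.
  move=> a c ha hc.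
  have := key hm hf0 hf1 hg00 hg E1 E2 (A:=1) isT (fun _ => hf20) c ha.
  rewrite /psadd /psz /psmono /lift2 /=.
  have -> : (c - 1 == 0)%N = false by apply/eqP; lia.
  by rewrite addr0 !mulr0 if_same subr0.
by split; apply: kk.
Qed.
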